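(* Let $G$ be a graph of order $n$ and diameter $d$. Let $T$ be a reduced tree decomposition of $G$ of length $\ell$ and width $w$. If there is a resolving set of size $k$ in $G$, then $n=\mathcal{O}(kd^2(2\ell+1)^{3w+1})$, where the constant implicit in the $\mathcal{O}$-notation is absolute (independent of $G$, $k$, $d$, $\ell$, $w$).
   Context: A set $R$ of vertices of a graph $G$ is a resolving set if for each pair $u,v$ of distinct vertices there is $x\in R$ with $d_G(x,u)\neq d_G(x,v)$. A tree decomposition of $G$ is a tree $T$ whose vertices (bags) are subsets of $V(G)$ such that: the union of all bags is $V(G)$; for every edge of $G$ some bag contains both ends; and if bag $Y$ lies on the path in $T$ from bag $X$ to bag $Z$, then $X\cap Z\subseteq Y$. Its width is $\max\{|X|-1: X\in V(T)\}$. The diameter of a bag $X$ is $\max_{x,y\in X} d_G(x,y)$ (distance in $G$), and the length of the decomposition is the largest diameter of a bag. A tree decomposition is reduced if no bag is a subset of another bag. *)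

(* Defs.v *)
From mathcomp Require Import all_boot.
Set Implicit Arguments. Unset Strict Implicit. Unset Printing Implicit Defensive.

Section Graphs.
Variable T : finType.
Variable e : rel T.

Definition simple_graph := symmetric e /\ irreflexive e.

Definition connected_graph := forall x y : T, connect e x y.

Definition walk_of_len (x y : T) (k : nat) : bool :=
  [exists p : k.-tuple T, path e x p && (last x p == y)].

(* d_G(x,y): least k such that there is an x-y walk of length k
   (= length of a shortest x-y path); it is #|T| if y is unreachable,
   which never happens in a connected graph. *)
Definition gdist (x y : T) : nat :=
  find (walk_of_len x y) (iota 0 #|T|).

Definition diameter : nat := \max_(x : T) \max_(y : T) gdist x y.

Definition resolving (R : {set T}) : Prop :=
  forall u v : T, u != v -> exists2 x, x \in R & gdist x u != gdist x v.

Variable B : finType.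
Variable t : rel B.
Variable bag : B -> {set T}.

Definition simple_path (X Z : B) (p : seq B) : Prop :=
  path t X p /\ last X p = Z /\ uniq (X :: p).

Definition is_tree : Prop :=
  [/\ symmetric t, irreflexive t & forall X Z : B, exists! p, simple_path X Z p].

Definition on_tree_path (X Z Y : B) : Prop :=
  exists p, simple_path X Z p /\ Y \in X :: p.

Definition tree_decomposition : Prop :=
  [/\ is_tree,
      (forall v : T, exists X : B, v \in bag X),
      (forall u v : T, e u v -> exists X : B, (u \in bag X) && (v \in bag X))
    & (forall X Y Z : B, on_tree_path X Z Y -> bag X :&: bag Z \subset bag Y)].

Definition reduced_td : Prop :=
  forall X Y : B, X != Y -> ~~ (bag X \subset bag Y).

Definition td_width : nat := \max_(X : B) #|bag X| - 1.

Definition bag_diam (X : B) : nat :=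
  \max_(x in bag X) \max_(y in bag X) gdist x y.

Definition td_length : nat := \max_(X : B) bag_diam X.

End Graphs.

(* Main.v *)
Require Import Defs.
From mathcomp Require Import all_boot zify.
From Stdlib Require Import ClassicalEpsilon.
Set Implicit Arguments. Unset Strict Implicit. Unset Printing Implicit Defensive.

Section Dist.
Variable T : finType.
Variable e : rel T.
Hypothesis esym : symmetric e.
Hypothesis econn : connected_graph e.

Lemma walk_gdist x y p : path e x p -> last x p = y -> gdist e x y <= size p.
Proof.
move=> pp lp; rewrite /gdist.
case: (ltnP (size p) #|T|) => hs.
  rewrite leqNgt; apply/negP => hlt.
  have := before_find 0 hlt; rewrite nth_iota // add0n.
  suff -> : walk_of_len e x y (size p) by [].
  apply/existsP; exists (in_tuple p); by rewrite /= pp lp eqxx.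
by apply: leq_trans (find_size _ _) _; rewrite size_iota.
Qed.

Lemma gdist_walk x y : exists p, [/\ path e x p, last x p = y & size p = gdist e x y].
Proof.
have hh: has (walk_of_len e x y) (iota 0 #|T|).
  have /connectP [p pp lp] := econn x y.
  rewrite lp; case: (shortenP pp) => q pq uq _.
  apply/hasP; exists (size q).
    rewrite mem_iota add0n /=.
    by rewrite -[_ < _]/(size (x::q) <= #|T|) -(card_uniqP uq) max_card.
  by apply/existsP; exists (in_tuple q); rewrite /= pq eqxx.
have hl : gdist e x y < #|T| by move: hh; rewrite has_find size_iota.
move: hh => /(nth_find 0); rewrite -/(gdist e x y).
rewrite nth_iota // add0n => /existsP [q /andP [pq /eqP lq]].
by exists q; rewrite size_tuple.
Qed.

Lemma gdist_tri x y z : gdist e x z <= gdist e x y + gdist e y z.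
Proof.
have [p [pp lp sp]] := gdist_walk x y.
have [q [pq lq sq]] := gdist_walk y z.
rewrite -sp -sq -size_cat; apply: walk_gdist.
  by rewrite cat_path pp lp pq.
by rewrite last_cat lp.
Qed.

Lemma gdist_sym x y : gdist e x y = gdist e y x.
Proof.
suff H : forall a b, gdist e a b <= gdist e b a.
  by apply/eqP; rewrite eqn_leq !H.
move=> a b; have [p [pp lp sp]] := gdist_walk b a.
rewrite -sp -(size_belast b p) -size_rev; apply: walk_gdist.
  by rewrite -lp rev_path; apply: sub_path pp => u v; rewrite /= esym.
case: p {pp sp} lp => [|z p] /= lp; first by rewrite lp.
by rewrite rev_cons last_rcons.
Qed.

Lemma gdist0 x : gdist e x x = 0.
Proof. by apply/eqP; rewrite -leqn0 (walk_gdist (p := [::])). Qed.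

Lemma gdist0_eq x y : gdist e x y = 0 -> x = y.
Proof.
have [p [pp lp sp]] := gdist_walk x y.
by rewrite -sp; case: p {pp sp} lp.
Qed.

End Dist.
Set Implicit Arguments. Unset Strict Implicit. Unset Printing Implicit Defensive.

Section Tree.
Variable B : finType.
Variable t : rel B.
Hypothesis tsym : symmetric t.
Hypothesis tirr : irreflexive t.
Hypothesis tuniq : forall X Z : B, exists! p, simple_path t X Z p.
Variable rho : B.

Lemma sp_uniq X Z p q : simple_path t X Z p -> simple_path t X Z q -> p = q.
Proof.
move=> hp hq; have [p0 [_ h]] := tuniq X Z.
by rewrite -(h _ hp) -(h _ hq).
Qed.

Definition rp (Z : B) : seq B := epsilon (inhabits [::]) (fun p => simple_path t rho Z p).

Lemma rpP Z : simple_path t rho Z (rp Z).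
Proof. by rewrite /rp; apply: epsilon_spec; have [p [hp _]] := tuniq rho Z; exists p. Qed.

Lemma rp_eq Z p : simple_path t rho Z p -> p = rp Z.
Proof. by move=> hp; apply: sp_uniq hp (rpP Z). Qed.

Definition anc (Y Z : B) : bool := Y \in rho :: rp Z.
Definition depth (Z : B) : nat := size (rp Z).

Lemma rp_root : rp rho = [::].
Proof. by symmetry; apply: rp_eq; split. Qed.

Lemma anc_root Z : anc rho Z.
Proof. by rewrite /anc mem_head. Qed.

Lemma anc_refl Z : anc Z Z.
Proof. by have [_ [lp _]] := rpP Z; rewrite /anc -{1}lp mem_last. Qed.

Lemma rp_prefix Y Z : anc Y Z -> rp Y = take (index Y (rho :: rp Z)) (rp Z).
Proof.
move=> hY; set p := rp Z; set i := index Y (rho :: p).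
have hi : i <= size p by rewrite -ltnS; have := hY; rewrite /anc -index_mem.
symmetry; apply: rp_eq; have [pp [lp up]] := rpP Z; split; last split.
- exact: take_path.
- rewrite (last_nth rho) size_take_min (minn_idPl hi).
  have -> : rho :: take i p = take i.+1 (rho :: p) by [].
  by rewrite nth_take // nth_index.
- have -> : rho :: take i p = take i.+1 (rho :: p) by [].
  exact: take_uniq.
Qed.

Lemma depth_anc Y Z : anc Y Z -> depth Y = index Y (rho :: rp Z).
Proof.
move=> hY; rewrite /depth (rp_prefix hY) size_take_min; apply/minn_idPl.
by rewrite -ltnS; have := hY; rewrite /anc -index_mem.
Qed.

Lemma anc_le Y Z : anc Y Z -> depth Y <= depth Z.
Proof.
move=> hY; rewrite (depth_anc hY) /depth -ltnS.
by have := hY; rewrite /anc -index_mem.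
Qed.

Lemma anc_eq Y Z : anc Y Z -> depth Z <= depth Y -> Y = Z.
Proof.
move=> hY hd; have hd' := anc_le hY.
have : index Y (rho :: rp Z) = size (rp Z).
  by rewrite -depth_anc //; apply/eqP; rewrite eqn_leq hd hd'.
have [_ [lp _]] := rpP Z.
move=> hi; rewrite -[Z in _ = Z]lp (last_nth rho) -hi nth_index //.
Qed.

Lemma anc_trans X Y Z : anc X Y -> anc Y Z -> anc X Z.
Proof.
move=> hX hY; move: hX; rewrite /anc (rp_prefix hY) => h.
have : X \in take (index Y (rho :: rp Z)).+1 (rho :: rp Z) by [].
exact: mem_take.
Qed.

Lemma anc_total X Y Z : anc X Z -> anc Y Z -> anc X Y || anc Y X.
Proof.
move=> hX hY.
wlog hle : X Y hX hY / index X (rho :: rp Z) <= index Y (rho :: rp Z).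
  move=> H; case: (leqP (index X (rho :: rp Z)) (index Y (rho :: rp Z))) => h.
    exact: H.
  by rewrite orbC; apply: H => //; apply: ltnW.
apply/orP; left; rewrite /anc (rp_prefix hY).
have -> : rho :: take (index Y (rho :: rp Z)) (rp Z)
   = take (index Y (rho :: rp Z)).+1 (rho :: rp Z) by [].
have hXm : index X (rho :: rp Z) < size (rho :: rp Z) by rewrite index_mem.
rewrite -(nth_index rho hX) -(nth_take _ (n0 := (index Y (rho :: rp Z)).+1)) //.
apply: mem_nth; rewrite size_take_min leq_min ltnS hle /=.
done.
Qed.


Definition parent (Z : B) : B := last rho (belast rho (rp Z)).

Lemma rp_rcons Z : Z != rho -> rp Z = rcons (rp (parent Z)) Z.
Proof.
move=> hZ; have [pp [lp up]] := rpP Z; rewrite /parent.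
move: pp lp up; case/lastP: (rp Z) => [|q z] pp lp up.
  by rewrite /= in lp; rewrite lp eqxx in hZ.
rewrite last_rcons in lp; subst z; rewrite belast_rcons /=; congr rcons.
apply: rp_eq; split; last split => //.
- by move: pp; rewrite rcons_path => /andP [].
- move: up; rewrite -cats1 -cat_cons cat_uniq => /and3P [] //.
Qed.

Lemma t_parent Z : Z != rho -> t (parent Z) Z.
Proof.
move=> hZ; have [pp [lp up]] := rpP Z; move: pp.
rewrite (rp_rcons hZ) rcons_path => /andP [_].
suff -> : last rho (rp (parent Z)) = parent Z by [].
by have [_ [-> _]] := rpP (parent Z).
Qed.

Lemma anc_parent Z : Z != rho -> anc (parent Z) Z.
Proof.
move=> hZ; rewrite /anc (rp_rcons hZ) -cats1 -cat_cons mem_cat; apply/orP; left.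
by have [_ [lp _]] := rpP (parent Z); rewrite -{1}lp mem_last.
Qed.

Lemma child Y X : anc Y X -> Y != X ->
  exists Z, [/\ anc Z X, Z != rho, parent Z = Y & depth Z = (depth Y).+1].
Proof.
move=> hY hYX; set p := rp X.
have hlt : depth Y < size p.
  rewrite ltn_neqAle anc_le // andbT; apply: contra hYX => /eqP h.
  by apply/eqP; apply: anc_eq => //; rewrite h /depth.
have [pp [lp up]] := rpP X.
have hZ : nth rho p (depth Y) \in p by apply: mem_nth.
have hZr : nth rho p (depth Y) != rho.
  by apply: contraTneq hZ => ->; move: up => /= /andP [].
exists (nth rho p (depth Y)); split => //.
- by rewrite /anc in_cons hZ orbT.
- have ha : anc (nth rho p (depth Y)) X by rewrite /anc in_cons hZ orbT.
  have h1 := rp_prefix ha.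
  have hi : index (nth rho p (depth Y)) (rho :: p) = (depth Y).+1.
    rewrite /= eq_sym (negbTE hZr) index_uniq //.
    by move: up => /= /andP [].
  rewrite hi (take_nth rho hlt) -/p in h1.
  rewrite (rp_rcons hZr) in h1.
  have := congr1 (fun s => belast rho s) h1; rewrite !belast_rcons => [[]] h2.
  have [_ [lp1 _]] := rpP (parent (nth rho p (depth Y))).
  have [_ [lp2 _]] := rpP Y.
  by rewrite -lp1 h2 (depth_anc hY) -(rp_prefix hY) lp2.
- have ha : anc (nth rho p (depth Y)) X by rewrite /anc in_cons hZ orbT.
  rewrite (depth_anc ha) /= eq_sym (negbTE hZr) index_uniq //.
  by move: up => /= /andP [].
Qed.

Section Sep.
Variable Z : B.
Hypothesis hZ : Z != rho.
Let P := parent Z.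
Let t' : rel B := [rel a b | t a b && ~~ ((a == P) && (b == Z)) && ~~ ((a == Z) && (b == P))].

Lemma t'sym : symmetric t'.
Proof. by move=> a b; rewrite /t' /= tsym; case: (a == P); case: (a == Z); case: (b == P); case: (b == Z); rewrite /= ?andbT ?andbF. Qed.

Lemma path_t'P x p : path t x p -> all (fun y => y != P) (x :: p) -> path t' x p.
Proof.
move=> hp ha; apply: (@sub_in_path _ (fun y => y != P) t t' _ x p ha hp).
move=> a b ha' hb' hab; rewrite /t' /= hab.
have ha2 : a != P := ha'. have hb2 : b != P := hb'.
by rewrite (negbTE ha2) (negbTE hb2) /= ?andbF.
Qed.

Lemma path_t'Z x p : path t x p -> all (fun y => y != Z) (x :: p) -> path t' x p.
Proof.
move=> hp ha; apply: (@sub_in_path _ (fun y => y != Z) t t' _ x p ha hp).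
move=> a b ha' hb' hab; rewrite /t' /= hab.
have ha2 : a != Z := ha'. have hb2 : b != Z := hb'.
by rewrite (negbTE ha2) (negbTE hb2) /= ?andbF.
Qed.

Lemma path_t'both x p : path t x p -> ~~ ((P \in x :: p) && (Z \in x :: p)) -> path t' x p.
Proof.
elim: p x => [//|y p IH] x /= /andP [hxy hp] hn; apply/andP; split.
  rewrite /t' /= hxy /=; apply/andP; split; apply: contra hn => /andP [/eqP -> /eqP ->];
    by rewrite !in_cons !eqxx ?orbT.
apply: IH => //; apply: contra hn => /andP [h1 h2].
by rewrite in_cons h1 in_cons h2 !orbT.
Qed.

Lemma PneZ : P != Z.
Proof. apply/eqP => h; have := t_parent hZ; by rewrite -/P h tirr. Qed.

Lemma noconn : ~~ connect t' Z P.
Proof.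
apply/negP => /connectP [q pq lq].
move: lq; case: (shortenP pq) => q' pq' uq' _ lq'.
have h1 : simple_path t Z P q'.
  split; last split => //.
  by apply: sub_path pq' => a b /= /andP [/andP []].
have h2 : simple_path t Z P [:: P].
  split; last split => //=.
  - by rewrite /= andbT tsym; apply: t_parent.
  - by rewrite /= andbT inE eq_sym PneZ.
have := sp_uniq h1 h2 => eq; subst q'.
by move: pq' => /= /andP [] /andP [] /andP [] _ _; rewrite !eqxx.
Qed.

Lemma sep_tree Z1 Z2 : anc Z Z1 -> ~~ anc Z Z2 ->
  on_tree_path t Z1 Z2 Z /\ on_tree_path t Z1 Z2 P.
Proof.
move=> h1 h2.
have [pi [[ppi [lpi upi]] _]] := tuniq Z1 Z2.
suff hb : (P \in Z1 :: pi) && (Z \in Z1 :: pi).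
  by case/andP: hb => hP hZ'; split; exists pi.
apply/negPn/negP => hn; move: (noconn) => /negP; apply.
have hc1 : connect t' Z Z1.
  have := rp_prefix h1; set i := index Z (rho :: rp Z1) => hpre.
  have [pp [lp up]] := rpP Z1.
  have hdec : rp Z1 = rp Z ++ drop i (rp Z1) by rewrite hpre cat_take_drop.
  have [_ [lpz _]] := rpP Z.
  move: pp up lp; rewrite hdec cat_path lpz -cat_cons cat_uniq last_cat lpz.
  move=> /andP [_ ps] /and3P [_ hs _] ls.
  apply/connectP; exists (drop i (rp Z1)) => //.
  apply: path_t'P => //=; rewrite eq_sym PneZ /=.
  apply/allP => y hy; apply: contra hs => /eqP hyP; apply/hasP; exists y => //.
  rewrite hyP /P; have := anc_parent hZ; rewrite /anc.
  by rewrite (rp_rcons hZ) -cats1 -cat_cons mem_cat => ->.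
have hc2 : connect t' Z1 Z2.
  by apply/connectP; exists pi => //; apply: path_t'both.
have hc3 : connect t' rho Z2.
  have [pp [lp up]] := rpP Z2.
  apply/connectP; exists (rp Z2) => //; apply: path_t'Z => //.
  by apply/allP => y hy; apply: contraNneq h2 => <-.
have hc4 : connect t' rho P.
  have [pp [lp up]] := rpP P.
  apply/connectP; exists (rp P) => //; apply: path_t'Z => //.
  have [_ [_ upz]] := rpP Z.
  move: upz; rewrite (rp_rcons hZ) -cats1 -cat_cons cat_uniq => /and3P [_ hh _].
  apply/allP => y hy; apply: contra hh => /eqP hyZ; subst y; rewrite /= orbF; exact: hy.
have hs := sym_connect_sym t'sym.
apply: connect_trans hc1 (connect_trans hc2 (connect_trans _ hc4)).
by rewrite hs.
Qed.

End Sep.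

End Tree.

Section TD.
Variable T : finType.
Variable e : rel T.
Hypothesis esym : symmetric e.
Hypothesis econn : connected_graph e.
Variable B : finType.
Variable t : rel B.
Variable bag : B -> {set T}.
Hypothesis tsym : symmetric t.
Hypothesis tirr : irreflexive t.
Hypothesis tuniq : forall X Z : B, exists! p, simple_path t X Z p.
Hypothesis hedge : forall u v : T, e u v -> exists X : B, (u \in bag X) && (v \in bag X).
Hypothesis hconv : forall X Y Z : B, on_tree_path t X Z Y -> bag X :&: bag Z \subset bag Y.
Variable rho : B.

Section SepD.
Variable Z : B.
Hypothesis hZ : Z != rho.
Let S := bag (parent t rho Z) :&: bag Z.
Let inn a := [exists Z1, anc t rho Z Z1 && (a \in bag Z1)].
Let out a := [exists Z2, ~~ anc t rho Z Z2 && (a \in bag Z2)].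

Lemma conv_S a : inn a -> out a -> a \in S.
Proof.
move=> /existsP [Z1 /andP [h1 a1]] /existsP [Z2 /andP [h2 a2]].
have [hp1 hp2] := sep_tree tsym tirr tuniq hZ h1 h2.
have hs1 := hconv hp1; have hs2 := hconv hp2.
have ha : a \in bag Z1 :&: bag Z2 by rewrite inE a1 a2.
by rewrite /S inE (subsetP hs1 _ ha) (subsetP hs2 _ ha).
Qed.

Lemma hit_S a p : path e a p -> inn a -> out (last a p) -> has (mem S) (a :: p).
Proof.
elim: p a => [|x p IH] a /=.
  by move=> _ hi ho; rewrite conv_S.
move=> /andP [hax hp] hi ho.
case ho' : (out a); first by rewrite (conv_S hi ho').
apply/orP; right; apply: IH => //.
have [X /andP [aX xX]] := hedge hax.
case hX : (anc t rho Z X).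
  by apply/existsP; exists X; rewrite hX xX.
by move: ho' => /negbT /negP; case; apply/existsP; exists X; rewrite hX aX.
Qed.

Lemma sep_dist a b : inn a -> out b ->
  exists2 s, s \in S & gdist e a b = gdist e a s + gdist e s b.
Proof.
move=> hi ho; have [p [pp lp sp]] := gdist_walk econn a b.
have := hit_S pp hi; rewrite lp => /(_ ho) /hasP [s hs hsS].
exists s => //.
case: (splitPl hs) pp lp sp => p1 p2 l1.
rewrite cat_path last_cat size_cat => /andP [pp1 pp2] l2 hsz.
apply/eqP; rewrite eqn_leq (gdist_tri econn) /= -hsz.
apply: leq_add; first exact: walk_gdist pp1 l1.
by rewrite -l1 in pp2 l2 *; apply: walk_gdist pp2 l2.
Qed.

End SepD.
End TD.
Definition laminar (T : finType) (L : {set {set T}}) :=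
  forall F G, F \in L -> G \in L -> [|| F \subset G, G \subset F | [disjoint F & G]].

Lemma laminar_card (T : finType) n : forall (U : {set T}) (L : {set {set T}}),
  #|U| = n ->
  (forall F, F \in L -> (F != set0) && (F \subset U)) -> laminar L ->
  #|L| <= 2 * #|U|.
Proof.
elim: n => [|n IH] U L hU hF hL.
  rewrite hU muln0 leqn0 cards_eq0; apply/eqP/setP => F; rewrite inE.
  apply/negP => hFL; have /andP [h1 h2] := hF F hFL.
  move: hU => /eqP; rewrite cards_eq0 => /eqP hU0.
  by move: h2; rewrite hU0 subset0 (negbTE h1).
have [x hx] : exists x, x \in U.
  by apply/set0Pn; rewrite -card_gt0 hU.
set U' := U :\ x.
have hU' : #|U'| = n by move: hU; rewrite (cardsD1 x U) hx add1n => [[]].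
set L' := [set F :\ x | F in [set F in L | F :\ x != set0]].
have hL' : #|L'| <= 2 * #|U'|.
  apply: (IH U' L' hU').
    move=> F' /imsetP [F]; rewrite inE => /andP [hFL hne] ->.
    rewrite hne /=; apply: setSD; by have /andP [] := hF F hFL.
  move=> F' G' /imsetP [F]; rewrite inE => /andP [hFL _] ->.
  move=> /imsetP [G]; rewrite inE => /andP [hGL _] ->.
  case/or3P: (hL F G hFL hGL) => h.
  - by rewrite (setSD _ h).
  - by rewrite (setSD _ h) orbT.
  - apply/or3P; apply: Or33; move: h; rewrite -!setI_eq0 => /eqP h.
    apply/eqP/setP => y; rewrite !inE; apply/negP => /and3P [/andP [_ h1] _ h2].
    by have := in_set0 y; rewrite -h inE h1 h2.
set Col := [set G in L | (x \in G) && (G :\ x \in L)].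
have hCol : #|Col| <= 1.
  apply/card_le1_eqP => G1 G2; rewrite !inE => /and3P [h1 x1 h1'] /and3P [h2 x2 h2'].
  wlog hsub : G1 G2 h1 x1 h1' h2 x2 h2' / G1 \subset G2.
    move=> H; case/or3P: (hL G1 G2 h1 h2) => h.
    - exact: H.
    - exact: (esym (H G2 G1 h2 x2 h2' h1 x1 h1' h)).
    - by move: h => /pred0P /(_ x); rewrite /= x1 x2.
  case/or3P: (hL G1 (G2 :\ x) h1 h2') => h.
  - by move: (subsetP h x x1); rewrite !inE eqxx.
  - suff h21 : G2 \subset G1 by apply/eqP; rewrite eqEsubset ?hsub ?h21.
    apply/subsetP => y hy.
    case: (eqVneq y x) => [->|hyx] //.
    by apply: (subsetP h); rewrite !inE hyx.
  - exfalso; have /andP [hne _] := hF _ h1'.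
    move: hne => /set0Pn [y]; rewrite !inE => /andP [hyx hy1].
    move: h => /pred0P /(_ y); rewrite /= hy1 !inE hyx /=.
    by rewrite (subsetP hsub _ hy1).
set A := Col :|: [set [set x]].
have hA : #|A| <= 2 by rewrite /A; apply: leq_trans (leq_card_setU _ _) _; rewrite cards1; lia.
set L0 := L :\: A.
have hL0 : #|L0| <= #|L'|.
  have -> : #|L0| = #|[set F :\ x | F in L0]|.
    symmetry; apply: card_in_imset => F G; rewrite !inE.
    move=> /andP [hFA hFL] /andP [hGA hGL] hFG.
    have key : forall F G, F \in L -> G \in L -> ~~ [&& F \in L, x \in F & F :\ x \in L] -> x \in F -> x \notin G ->
                F :\ x = G :\ x -> False.
      move=> F1 G1 hF1 hG1 hC x1 x2 he; move: hC; rewrite hF1 x1 /= he.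
      suff -> : G1 :\ x = G1 by rewrite hG1.
      apply/setP => y; rewrite !inE; case: (eqVneq y x) => // ->; by rewrite (negbTE x2).
    move: hFA hGA; rewrite !negb_or => /andP [hFC _] /andP [hGC _].
    case xF : (x \in F); case xG : (x \in G).
    - apply/setP => y; case: (eqVneq y x) => [->|hyx]; first by rewrite xF xG.
      by move/setP: hFG => /(_ y); rewrite !inE hyx.
    - by exfalso; apply: (key F G) => //; rewrite xG.
    - by exfalso; apply: (key G F) => //; rewrite xF.
    - apply/setP => y; case: (eqVneq y x) => [->|hyx]; first by rewrite xF xG.
      by move/setP: hFG => /(_ y); rewrite !inE hyx.
  apply: subset_leq_card; apply/subsetP => F' /imsetP [F]; rewrite !inE => /andP [hFA hFL] ->.
  apply/imsetP; exists F => //; rewrite inE hFL /=.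
  move: hFA; rewrite negb_or => /andP [_ hne].
  apply: contra hne => /eqP h; apply/eqP/setP => y; rewrite !inE.
  have /andP [hF0 _] := hF F hFL.
  case: (eqVneq y x) => [->|hyx].
    move: hF0 => /set0Pn [z hz]; case: (eqVneq z x) => [<- //|hzx].
    by move/setP: h => /(_ z); rewrite !inE hzx hz.
  by move/setP: h => /(_ y); rewrite !inE hyx.
have : #|L| <= #|L :&: A| + #|L0| by rewrite cardsID.
have : #|L :&: A| <= #|A| by apply: subset_leq_card; apply: subsetIr.
rewrite hU hU' in hL' *; lia.
Qed.

Section Main.
Variable T : finType.
Variable e : rel T.
Hypothesis hesym : symmetric e.
Hypothesis econn : connected_graph e.
Variable B : finType.
Variable t : rel B.
Variable bag : B -> {set T}.
Hypothesis tsym : symmetric t.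
Hypothesis tirr : irreflexive t.
Hypothesis tuniq : forall X Z : B, exists! p, simple_path t X Z p.
Hypothesis hcover : forall v : T, exists X : B, v \in bag X.
Hypothesis hedge : forall u v : T, e u v -> exists X : B, (u \in bag X) && (v \in bag X).
Hypothesis hconv : forall X Y Z : B, on_tree_path t X Z Y -> bag X :&: bag Z \subset bag Y.
Variable R : {set T}.
Hypothesis hres : resolving e R.
Variable X0 : B.
Variable r1 : T.
Hypothesis hr1 : r1 \in R.

Definition Bf (v : T) : B := odflt X0 [pick X | v \in bag X].

Lemma Bf_in v : v \in bag (Bf v).
Proof.
rewrite /Bf; case: pickP => [X //|h].
by have [X hX] := hcover v; move: (h X); rewrite hX.
Qed.

Let rho := Bf r1.
Local Notation ancr := (anc t rho).
Local Notation dep := (depth t rho).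

Definition Sub (Y : B) : {set T} := [set r in R | ancr Y (Bf r)].

Lemma Sub_root : Sub rho = R.
Proof. by apply/setP => r; rewrite inE anc_root andbT. Qed.

Lemma depth_root : dep rho = 0.
Proof. by rewrite /depth (rp_root tuniq). Qed.

Definition Yv (v : T) : B :=
  [arg max_(Y > rho | ancr Y (Bf v) && (Sub Y != set0)) dep Y].

Definition key (v : T) : {set T} := Sub (Yv v).

Definition bot (K : {set T}) : B :=
  if [pick Y | Sub Y == K] is Some Y0 then [arg max_(Y > Y0 | Sub Y == K) dep Y] else rho.
Definition top (K : {set T}) : B :=
  if [pick Y | Sub Y == K] is Some Y0 then [arg min_(Y < Y0 | Sub Y == K) dep Y] else rho.


Lemma Sub_ne0 : Sub rho != set0.
Proof. by rewrite Sub_root; apply/set0Pn; exists r1. Qed.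

Lemma Yv_spec v : [/\ ancr (Yv v) (Bf v), Sub (Yv v) != set0 &
  forall Y, ancr Y (Bf v) -> Sub Y != set0 -> dep Y <= dep (Yv v)].
Proof.
rewrite /Yv; case: arg_maxnP => [|Y /andP [h1 h2] hmax].
  by rewrite anc_root Sub_ne0.
by split => // Y' h1' h2'; apply: hmax; rewrite h1' h2'.
Qed.

Lemma bot_spec K Y : Sub Y = K ->
  Sub (bot K) = K /\ (forall Y', Sub Y' = K -> dep Y' <= dep (bot K)).
Proof.
move=> hYK; rewrite /bot; case: pickP => [Y0 hY0 | h].
  case: arg_maxnP => // Yb /eqP hb hmax; split => // Y' hY'; apply: hmax; exact/eqP.
by move: (h Y); rewrite hYK eqxx.
Qed.

Lemma top_spec K Y : Sub Y = K ->
  Sub (top K) = K /\ (forall Y', Sub Y' = K -> dep (top K) <= dep Y').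
Proof.
move=> hYK; rewrite /top; case: pickP => [Y0 hY0 | h].
  case: arg_minnP => // Yb /eqP hb hmin; split => // Y' hY'; apply: hmin; exact/eqP.
by move: (h Y); rewrite hYK eqxx.
Qed.

Lemma cmp Y1 Y2 : Sub Y1 = Sub Y2 -> Sub Y1 != set0 -> dep Y1 <= dep Y2 -> ancr Y1 Y2.
Proof.
move=> hS /set0Pn [r hr] hd.
have hr2 : r \in Sub Y2 by rewrite -hS.
move: hr hr2; rewrite !inE => /andP [_ h1] /andP [_ h2].
case/orP: (anc_total tuniq h1 h2) => // h21.
have := anc_eq tuniq h21 hd => ->; exact: anc_refl.
Qed.

Definition repb (S : {set T}) (r v : T) : bool :=
  [exists s in S, gdist e r v == gdist e r s + gdist e s v].

Definition Slow K := bag (parent t rho (bot K)) :&: bag (bot K).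
Definition Stop K := bag (parent t rho (top K)) :&: bag (top K).

Definition C1 K := [set v | (key v == K) &&
  [forall r in R, if r \in K then repb (Slow K) r v else repb (Stop K) r v]].
Definition C2 K := [set v | (key v == K) &&
  [exists S in powerset (bag (bot K)), [forall r in R, repb S r v]]].

Lemma sepd Z a b : Z != rho -> (exists Z1, ancr Z Z1 && (a \in bag Z1)) ->
  (exists Z2, ~~ ancr Z Z2 && (b \in bag Z2)) ->
  exists2 s, s \in bag (parent t rho Z) :&: bag Z & gdist e a b = gdist e a s + gdist e s b.
Proof.
move=> hZ [Z1 h1] [Z2 h2].
apply: (sep_dist econn tsym tirr tuniq hedge hconv hZ); apply/existsP.
  by exists Z1. by exists Z2.
Qed.

Lemma cover v : v \in C1 (key v) :|: C2 (key v).
Proof.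
have [hYX hY0 hYmax] := Yv_spec v.
set X := Bf v in hYX hYmax; set Y := Yv v in hYX hY0 hYmax.
set K := key v.
have hYK : Sub Y = K by [].
have [hbK hbmax] := bot_spec hYK.
have [htK htmin] := top_spec hYK.
have hK0 : K != set0 by rewrite -hYK.
case: (ltnP (dep Y) (dep (bot K))) => hlt.
-
  rewrite inE; apply/orP; left; rewrite inE eqxx /=.
  have hYb : ancr Y (bot K) by apply: cmp; rewrite ?hbK // ltnW.
  have hbr : bot K != rho.
    by apply: contraTneq hlt => ->; rewrite depth_root -leqNgt.
  have htY : ancr (top K) Y by apply: cmp; rewrite ?htK ?htmin // -htK.
  apply/forallP => r; apply/implyP => hr.
  case: ifP => hrK.
  + have [s hs hd] : exists2 s, s \in Slow K & gdist e r v = gdist e r s + gdist e s v.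
      apply: sepd => //.
        exists (Bf r); rewrite Bf_in andbT.
        by move: hrK; rewrite -{1}hbK inE => /andP [].
      exists X; rewrite Bf_in andbT; apply/negP => hbX.
      have := hbmax Y hYK; have := hYmax _ hbX; rewrite hbK => /(_ hK0) h1 h2.
      by move: hlt; rewrite ltnNge h1.
    by apply/existsP; exists s; rewrite hs hd eqxx.
  + have htr : top K != rho.
      apply: contraFneq hrK => h; by rewrite -htK h Sub_root.
    have [s hs hd] : exists2 s, s \in Stop K & gdist e v r = gdist e v s + gdist e s r.
      apply: sepd => //.
        by exists X; rewrite Bf_in andbT (anc_trans tuniq htY hYX).
      exists (Bf r); rewrite Bf_in andbT; apply/negP => h.
      by move: hrK; rewrite -htK inE hr h.
    apply/existsP; exists s; rewrite hs /=.
    apply/eqP; rewrite (gdist_sym hesym econn r v) hd (gdist_sym hesym econn v s).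
    by rewrite (gdist_sym hesym econn s r) addnC.
-
  have hbY : bot K = Y.
    have hb0 : Sub (bot K) != set0 by rewrite hbK.
    have hb : ancr (bot K) Y := cmp (etrans hbK (esym hYK)) hb0 hlt.
    exact: (anc_eq tuniq hb (hbmax Y hYK)).
  rewrite inE; apply/orP; right; rewrite inE eqxx /=.
  case: (eqVneq Y X) => hYXe.
  + apply/existsP; exists [set v]; rewrite inE sub1set hbY hYXe Bf_in /=.
    apply/forallP => r; apply/implyP => _; apply/existsP; exists v.
    by rewrite inE eqxx /= gdist0 addn0.
  + have [Z [hZX hZr hpZ hdZ]] := child tuniq hYX hYXe.
    have hZ0 : Sub Z == set0.
      apply: contraT => hZ0; have := hYmax _ hZX hZ0; by rewrite hdZ ltnn.
    apply/existsP; exists (bag (parent t rho Z) :&: bag Z).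
    rewrite inE hpZ -hbY subsetIl /=.
    apply/forallP => r; apply/implyP => hr.
    have [s hs hd] : exists2 s, s \in bag (parent t rho Z) :&: bag Z &
         gdist e v r = gdist e v s + gdist e s r.
      apply: sepd => //.
        by exists X; rewrite Bf_in andbT.
      exists (Bf r); rewrite Bf_in andbT; apply/negP => h.
      by move: hZ0 => /eqP /setP /(_ r); rewrite !inE hr h.
    apply/existsP; exists s; rewrite hbY -hpZ hs /=.
    apply/eqP; rewrite (gdist_sym hesym econn r v) hd (gdist_sym hesym econn v s).
    by rewrite (gdist_sym hesym econn s r) addnC.
Qed.


Local Notation dd := (diameter e).
Local Notation ll := (td_length e bag).
Local Notation ww := (td_width bag).

Lemma gd_le a b : gdist e a b <= dd.
Proof.
rewrite /diameter; apply: leq_trans (leq_bigmax a).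
exact: (leq_bigmax (F := fun y => gdist e a y) b).
Qed.

Lemma bag_l Y a b : a \in bag Y -> b \in bag Y -> gdist e a b <= ll.
Proof.
move=> ha hb; rewrite /td_length; apply: leq_trans (leq_bigmax Y).
rewrite /bag_diam; apply: (bigmax_sup a) => //.
exact: (bigmax_sup b).
Qed.

Lemma bag_w Y : #|bag Y| <= ww.+1.
Proof.
rewrite /td_width; have := leq_bigmax (F := fun X => #|bag X|) Y.
move=> h; lia.
Qed.

Definition Code := ('I_dd.+1 * {ffun 'I_ww.+1 -> 'I_(2 * ll).+1})%type.

Definition enc (S : {set T}) (v : T) : Code :=
  let s0 := nth r1 (enum S) 0 in
  (inord (gdist e s0 v),
   [ffun i : 'I_ww.+1 => inord (gdist e (nth r1 (enum S) i) v + ll - gdist e s0 v)]).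

Lemma enc_inj Y (S : {set T}) u v : S \subset bag Y -> enc S u = enc S v ->
  forall s, s \in S -> gdist e s u = gdist e s v.
Proof.
move=> hS heq s hs.
have hsz : index s (enum S) < size (enum S) by rewrite index_mem mem_enum.
have hs0 : nth r1 (enum S) 0 \in S.
  by rewrite -mem_enum mem_nth //; apply: leq_ltn_trans hsz.
set s0 := nth r1 (enum S) 0 in hs0 heq.
case: heq => h1 h2.
have e0 : gdist e s0 u = gdist e s0 v.
  have := congr1 (@nat_of_ord _) h1; rewrite !inordK // ltnS; exact: gd_le.
have hi : index s (enum S) < ww.+1.
  apply: leq_trans hsz _; rewrite -cardE; apply: leq_trans (bag_w Y).
  exact: subset_leq_card.
have := congr1 (fun f : {ffun 'I_ww.+1 -> 'I_(2 * ll).+1} => nat_of_ord (f (Ordinal hi))) h2; rewrite /= !ffunE /= nth_index ?mem_enum //.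
have b1 := bag_l (subsetP hS _ hs) (subsetP hS _ hs0).
have b2 := bag_l (subsetP hS _ hs0) (subsetP hS _ hs).
have t1 := gdist_tri econn s s0 u; have t2 := gdist_tri econn s0 s u.
have t3 := gdist_tri econn s s0 v; have t4 := gdist_tri econn s0 s v.
rewrite !inordK -/s0; [lia| |]; rewrite ltnS -/s0; lia.
Qed.

Lemma rep_eq (S : {set T}) r u v : repb S r u -> repb S r v ->
  (forall s, s \in S -> gdist e s u = gdist e s v) -> gdist e r u = gdist e r v.
Proof.
move=> /existsP [s1 /andP [hs1 /eqP h1]] /existsP [s2 /andP [hs2 /eqP h2]] H.
have := gdist_tri econn r s1 v; have := gdist_tri econn r s2 u.
rewrite -(H _ hs1) (H _ hs2); lia.
Qed.

Lemma eq_of_R u v : (forall r, r \in R -> gdist e r u = gdist e r v) -> u = v.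
Proof.
move=> H; apply/eqP; apply: contraT => huv.
by have [r hr] := hres huv; rewrite H ?eqxx.
Qed.

Lemma Slow_sub K : Slow K \subset bag (bot K).
Proof. exact: subsetIr. Qed.
Lemma Stop_sub K : Stop K \subset bag (top K).
Proof. exact: subsetIr. Qed.

Lemma card_C1 K : #|C1 K| <= #|{: Code}| * #|{: Code}|.
Proof.
rewrite -(card_in_imset (f := fun v => (enc (Stop K) v, enc (Slow K) v))).
  by rewrite -card_prod max_card.
move=> u v; rewrite !inE => /andP [_ /forallP hu] /andP [_ /forallP hv] heq.
have h1 : enc (Stop K) u = enc (Stop K) v := congr1 fst heq.
have h2 : enc (Slow K) u = enc (Slow K) v := congr1 snd heq.
apply: eq_of_R => r hr.
move: (hu r) (hv r); rewrite hr /=; case: ifP => _ hur hvr.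
  exact: rep_eq hur hvr (enc_inj (Slow_sub K) h2).
exact: rep_eq hur hvr (enc_inj (Stop_sub K) h1).
Qed.

Definition Sv K v := odflt set0 [pick S in powerset (bag (bot K)) | [forall r in R, repb S r v]].

Lemma card_C2 K : #|C2 K| <= 2 ^ ww.+1 * #|{: Code}|.
Proof.
rewrite -(card_in_imset (f := fun v => (Sv K v, enc (Sv K v) v))).
  apply: leq_trans (_ : #|setX (powerset (bag (bot K))) [set: Code]| <= _).
    apply: subset_leq_card; apply/subsetP => p /imsetP [v hv ->].
    rewrite inE /= in_setT andbT /Sv.
    case: pickP => [S /andP [] //|].
    move: hv; rewrite inE => /andP [_ /existsP [S /andP [h1 h2]]] /(_ S).
    by rewrite h1 h2.
  rewrite cardsX card_powerset cardsT leq_mul2r leq_exp2l ?bag_w ?orbT //.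
move=> u v hu hv heq.
have hS : Sv K u = Sv K v := congr1 fst heq.
have he : enc (Sv K u) u = enc (Sv K v) v := congr1 snd heq.
have spec : forall w, w \in C2 K -> forall r, r \in R -> repb (Sv K w) r w.
  move=> w; rewrite inE => /andP [_ /existsP [S /andP [h1 h2]]] r hr.
  rewrite /Sv; case: pickP => [S' /andP [_ /forallP h] | h].
    by move: (h r); rewrite hr.
  by move: (h S); rewrite h1 h2.
have hsub : Sv K u \subset bag (bot K).
  rewrite /Sv; case: pickP => [S' /andP [] | _]; first by rewrite inE.
  exact: sub0set.
apply: eq_of_R => r hr.
apply: rep_eq (spec _ hu r hr) _ (enc_inj hsub _).
  by rewrite hS; apply: spec.
by rewrite he hS.
Qed.

Definition keys := [set key v | v in T].

Lemma keys_laminar : laminar keys.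
Proof.
move=> F G /imsetP [u _ ->] /imsetP [v _ ->].
case: (boolP [disjoint key u & key v]) => hd; first by rewrite !orbT.
move: hd => /pred0Pn [r /andP [/= h1 h2]].
move: h1 h2; rewrite !inE => /andP [hr a1] /andP [_ a2].
case/orP: (anc_total tuniq a1 a2) => h.
  apply/orP; right; apply/orP; left; apply/subsetP => r'; rewrite !inE => /andP [-> a].
  exact: (anc_trans tuniq h a).
apply/orP; left; apply/subsetP => r'; rewrite !inE => /andP [-> a].
exact: (anc_trans tuniq h a).
Qed.

Lemma card_keys : #|keys| <= 2 * #|R|.
Proof.
apply: (laminar_card (n := #|R|)) => //; last exact: keys_laminar.
move=> F /imsetP [v _ ->]; have [_ h _] := Yv_spec v.
by rewrite /key h /=; apply/subsetP => r; rewrite inE => /andP [].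
Qed.

Lemma count_main :
  #|T| <= 2 * #|R| * (#|{: Code}| * #|{: Code}| + 2 ^ ww.+1 * #|{: Code}|).
Proof.
have -> : #|T| = \sum_(v : T) 1 by rewrite sum1_card.
rewrite (partition_big key (mem keys)) /=; last first.
  by move=> v _; apply: imset_f.
apply: leq_trans (_ : \sum_(K in keys) (#|{: Code}| * #|{: Code}| + 2 ^ ww.+1 * #|{: Code}|) <= _).
  apply: leq_sum => K _; rewrite sum1_card.
  apply: leq_trans (_ : #|C1 K :|: C2 K| <= _).
    apply: subset_leq_card; apply/subsetP => v hv.
    have /eqP hk : key v == K := hv.
    rewrite -hk; exact: cover.
  rewrite cardsU; apply: leq_trans (leq_subr _ _) _.
  by apply: leq_add; [apply: card_C1 | apply: card_C2].
by rewrite sum_nat_const leq_mul2r card_keys orbT.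
Qed.

End Main.

Theorem theorem2 :
  exists C : nat,
  forall (T : finType) (e : rel T) (B : finType) (t : rel B)
         (bag : B -> {set T}) (R : {set T}) (n d l w k : nat),
    simple_graph e -> connected_graph e -> 2 <= #|T| ->
    tree_decomposition e t bag -> reduced_td bag ->
    n = #|T| -> d = diameter e -> l = td_length e bag -> w = td_width bag ->
    resolving e R -> #|R| = k ->
    n <= C * (k * d ^ 2 * (2 * l + 1) ^ (3 * w + 1)).
Proof.
exists 12 => T e B t bag R n d l w k [hesym eirr] econn hT.
move=> [[tsym tirr tuniq] hcover hedge hconv] _ -> -> -> -> hres hk.
have /card_gt1P [x [y [_ _ hxy]]] := hT.
have [r1 hr1 _] := hres x y hxy.
have [X0 _] := hcover x.
have hc := count_main hesym econn tsym tirr tuniq hcover hedge hconv hres X0 hr1.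
have [x1 hxx1] : exists x1, e x x1.
  have /connectP [p pp lp] := econn x y.
  case: p pp lp => [|x1 p] /=; first by move=> _ hyx; rewrite hyx eqxx in hxy.
  by move=> /andP [h _] _; exists x1.
have hx1 : x != x1 by apply: contraTneq hxx1 => <-; rewrite eirr.
have [Y /andP [hxY hx1Y]] := hedge _ _ hxx1.
have hd1 : 1 <= gdist e x x1.
  rewrite lt0n; apply/negP => /eqP h; move: hx1; by rewrite (gdist0_eq econn h) eqxx.
have hl1 := bag_l e hxY hx1Y.
have hd2 := gd_le e x x1.
have hw2 : 2 <= #|bag Y|.
  have := cards2 x x1; rewrite hx1 /= => <-; apply: subset_leq_card; apply/subsetP => z.
  by rewrite !inE => /orP [] /eqP ->.
have hw1 : 1 <= td_width bag.
  rewrite /td_width; have := leq_bigmax (F := fun X => #|bag X|) Y; lia.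
rewrite card_prod !card_ord card_ffun !card_ord in hc.
set D := diameter e in hc hd2 *; set L := td_length e bag in hc hl1 *.
set W := td_width bag in hc hw1 *.
set q := (2 * L).+1 in hc.
have -> : 2 * L + 1 = q by rewrite addn1.
have hq : 3 <= q by rewrite /q; lia.
set P := q ^ W.+1 in hc.
have hP2 : 2 ^ W.+1 <= P by rewrite /P leq_exp2r //; lia.
have hPP : P * P <= q ^ (3 * W + 1).
  by rewrite /P -expnD leq_pexp2l //; lia.
rewrite -hk; apply: leq_trans hc _.
set Q := q ^ (3 * W + 1) in hPP *.
set A := 2 ^ W.+1 in hP2 *.
set K := #|R|.
have hD : 1 <= D by lia.
have e1 : D.+1 * P <= 2 * D * P by rewrite leq_mul2r; apply/orP; right; lia.
have h1 : D.+1 * P * (D.+1 * P) <= 4 * (D * D) * Q.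
  apply: leq_trans (leq_mul e1 e1) _.
  have -> : 2 * D * P * (2 * D * P) = 4 * (D * D) * (P * P).
    by nia.
  by rewrite leq_mul2l hPP orbT.
have h2 : A * (D.+1 * P) <= 2 * (D * D) * Q.
  apply: leq_trans (leq_mul hP2 e1) _.
  have -> : P * (2 * D * P) = 2 * D * (P * P).
    by nia.
  apply: leq_mul; last exact: hPP.
  by rewrite leq_mul2l; apply/orP; right; rewrite -{1}(muln1 D) leq_mul2l hD orbT.
rewrite expnS expn1.
have h3 : D.+1 * P * (D.+1 * P) + A * (D.+1 * P) <= 6 * (D * D * Q).
  by apply: leq_trans (leq_add h1 h2) _; nia.
apply: leq_trans (leq_mul (leqnn (2 * K)) h3) _.
nia.
Qed.
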